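(* Let $q \geq 1$ and $n \geq 5$ be integers. Let $G_{n} := (\mathbb{Z}/2\mathbb{Z})^{qn} \times (\mathbb{Z}/4\mathbb{Z})^{qn}$ and $H_{n} := (\mathbb{Z}/2\mathbb{Z})^{q(n-2)} \times (\mathbb{Z}/4\mathbb{Z})^{q(n+1)}$. Then Duplicator has a winning strategy in the $q$-ary count-free pebble game on $(G_n, H_n)$ with $qn/4$ pebble pairs.
   Context: The $q$-ary count-free $m$-pebble game on finite groups $G, H$ is played by Spoiler and Duplicator with $m$ pebble pairs $(p_i, p_i')$. If $|G| \neq |H|$, Spoiler wins immediately. Each round proceeds as follows: (1) Spoiler picks up $d$ pebble pairs, where $1 \le d \le q$; (2) the winning condition is checked; (3) Spoiler places the $d$ chosen pebbles from one side on $d$ elements of one of the groups (of his choice), and then Duplicator places the corresponding partner pebbles on $d$ elements of the other group. Winning condition: if $g_1, \ldots, g_m$ are the pebbled elements of $G$ and $h_1, \ldots, h_m$ the corresponding pebbled elements of $H$, Spoiler wins if the map $g_i \mapsto h_i$ does not extend to an isomorphism $\langle g_1, \ldots, g_m\rangle \to \langle h_1, \ldots, h_m\rangle$; otherwise play continues. Duplicator has a winning strategy if she can prevent Spoiler from ever winning, for any number of rounds. *)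

(* Defs.v *)
From mathcomp Require Import all_boot all_fingroup all_algebra.
Set Implicit Arguments. Unset Strict Implicit. Unset Printing Implicit Defensive.
Local Open Scope group_scope.

(* Concrete groups: (Z/2)^a x (Z/4)^b, with the additive group structure
   of row vectors over 'Z_2 and 'Z_4 (seen as finGroupTypes). *)
Definition Z2Z4 (a b : nat) : finGroupType := ('rV['Z_2]_a * 'rV['Z_4]_b)%type.

Definition Gn (q n : nat) : finGroupType := Z2Z4 (q * n) (q * n).
Definition Hn (q n : nat) : finGroupType := Z2Z4 (q * (n - 2)) (q * (n + 1)).

Section Game.
Variables (gT hT : finGroupType) (m q : nat).

(* A configuration: pebble pair i is either off the board (None) or
   placed on (g_i, h_i). *)
Definition config := 'I_m -> option (gT * hT).

Definition pebbled (c : config) : seq (gT * hT) := pmap c (enum 'I_m).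

Definition extends_to_iso (c : config) : Prop :=
  let gs := [set p.1 | p in pebbled c] in
  let hs := [set p.2 | p in pebbled c] in
  exists f : {morphism <<gs>> >-> hT},
    isom <<gs>> <<hs>> f /\ forall p, p \in pebbled c -> f p.1 = p.2.

Definition pick_up (D : {set 'I_m}) (c : config) : config :=
  fun i => if i \in D then None else c i.

Definition place (D : {set 'I_m}) (a : 'I_m -> gT) (b : 'I_m -> hT)
  (c : config) : config :=
  fun i => if i \in D then Some (a i, b i) else c i.

CoInductive dup_survives (c : config) : Prop :=
  DupSurvives :
    (forall D : {set 'I_m}, 1 <= #|D| <= q ->
       extends_to_iso (pick_up D c)
       /\ (forall a : 'I_m -> gT, exists b : 'I_m -> hT,
              dup_survives (place D a b c))
       /\ (forall b : 'I_m -> hT, exists a : 'I_m -> gT,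
              dup_survives (place D a b c))) ->
    dup_survives c.

Definition dup_wins_game : Prop :=
  #|[set: gT]| = #|[set: hT]| /\ dup_survives (fun _ => None).

End Game.

(* Main.v *)
Require Import Defs.
From mathcomp Require Import all_boot all_fingroup all_algebra.
From mathcomp Require Import zify.
Set Implicit Arguments. Unset Strict Implicit. Unset Printing Implicit Defensive.

Module Dev.
Import GRing.Theory.
Local Open Scope ring_scope.

Definition V a b := ('rV['Z_2]_a * 'rV['Z_4]_b)%type.

Section Base.
Variables a b : nat.
Implicit Types x y z : V a b.

Definition c2 x (i : nat) : 'Z_2 :=
  if insub i is Some i' then x.1 0 (i' : 'I_a) else 0.
Definition c4 x (i : nat) : 'Z_4 :=
  if insub i is Some i' then x.2 0 (i' : 'I_b) else 0.

Definition mk (f2 : nat -> 'Z_2) (f4 : nat -> 'Z_4) : V a b :=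
  (\row_(i < a) f2 i, \row_(i < b) f4 i).

Lemma c2E x (i : 'I_a) : c2 x i = x.1 0 i.
Proof. by rewrite /c2 valK. Qed.
Lemma c4E x (i : 'I_b) : c4 x i = x.2 0 i.
Proof. by rewrite /c4 valK. Qed.
Lemma c2_out x i : (a <= i)%N -> c2 x i = 0.
Proof. by move=> h; rewrite /c2 insubF // ltnNge h. Qed.
Lemma c4_out x i : (b <= i)%N -> c4 x i = 0.
Proof. by move=> h; rewrite /c4 insubF // ltnNge h. Qed.

Lemma c2mk f2 f4 i : c2 (mk f2 f4) i = if (i < a)%N then f2 i else 0.
Proof.
case: ltnP => h; last by rewrite c2_out.
by rewrite -[i]/(nat_of_ord (Ordinal h)) c2E mxE.
Qed.
Lemma c4mk f2 f4 i : c4 (mk f2 f4) i = if (i < b)%N then f4 i else 0.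
Proof.
case: ltnP => h; last by rewrite c4_out.
by rewrite -[i]/(nat_of_ord (Ordinal h)) c4E mxE.
Qed.

Lemma Vext x y : (forall i, (i < a)%N -> c2 x i = c2 y i) ->
  (forall i, (i < b)%N -> c4 x i = c4 y i) -> x = y.
Proof.
case: x => x1 x2; case: y => y1 y2 h2 h4; congr pair; apply/rowP => i.
  by have := h2 i (ltn_ord i); rewrite !c2E.
by have := h4 i (ltn_ord i); rewrite !c4E.
Qed.

Lemma Vext' x y : (forall i, c2 x i = c2 y i) ->
  (forall i, c4 x i = c4 y i) -> x = y.
Proof. by move=> h1 h2; apply: Vext. Qed.

Lemma c2D x y i : c2 (x + y) i = c2 x i + c2 y i.
Proof.
case: (ltnP i a) => h; last by rewrite !c2_out // addr0.
by rewrite -[i]/(nat_of_ord (Ordinal h)) !c2E /= mxE.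
Qed.
Lemma c4D x y i : c4 (x + y) i = c4 x i + c4 y i.
Proof.
case: (ltnP i b) => h; last by rewrite !c4_out // addr0.
by rewrite -[i]/(nat_of_ord (Ordinal h)) !c4E /= mxE.
Qed.
Lemma c20 i : c2 0 i = 0.
Proof.
case: (ltnP i a) => h; last by rewrite !c2_out.
by rewrite -[i]/(nat_of_ord (Ordinal h)) !c2E /= mxE.
Qed.
Lemma c40 i : c4 0 i = 0.
Proof.
case: (ltnP i b) => h; last by rewrite !c4_out.
by rewrite -[i]/(nat_of_ord (Ordinal h)) !c4E /= mxE.
Qed.
Lemma c2N x i : c2 (- x) i = - c2 x i.
Proof. by apply/eqP; rewrite -subr_eq0 opprK -c2D addNr c20. Qed.
Lemma c4N x i : c4 (- x) i = - c4 x i.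
Proof. by apply/eqP; rewrite -subr_eq0 opprK -c4D addNr c40. Qed.
Lemma c2B x y i : c2 (x - y) i = c2 x i - c2 y i.
Proof. by rewrite c2D c2N. Qed.
Lemma c4B x y i : c4 (x - y) i = c4 x i - c4 y i.
Proof. by rewrite c4D c4N. Qed.
Lemma c2Mn x n i : c2 (x *+ n) i = c2 x i *+ n.
Proof. by elim: n => [|n IH]; rewrite ?c20 // !mulrS c2D IH. Qed.
Lemma c4Mn x n i : c4 (x *+ n) i = c4 x i *+ n.
Proof. by elim: n => [|n IH]; rewrite ?c40 // !mulrS c4D IH. Qed.

Definition inK k x : Prop := forall i, (k <= i)%N -> c2 x i = 0 /\ c4 x i = 0.
Definition inKb k x : bool :=
  [forall i : 'I_a, (k <= i)%N ==> (x.1 0 i == 0)] &&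
  [forall i : 'I_b, (k <= i)%N ==> (x.2 0 i == 0)].
Lemma inKP k x : reflect (inK k x) (inKb k x).
Proof.
apply: (iffP andP).
  case=> /forallP h1 /forallP h2 i ki; split.
    case: (ltnP i a) => h; last by rewrite c2_out.
    by rewrite -[i]/(nat_of_ord (Ordinal h)) c2E; apply/eqP; exact: (implyP (h1 _)).
  case: (ltnP i b) => h; last by rewrite c4_out.
  by rewrite -[i]/(nat_of_ord (Ordinal h)) c4E; apply/eqP; exact: (implyP (h2 _)).
move=> h; split; apply/forallP => i; apply/implyP => ki; apply/eqP.
  by rewrite -c2E; case: (h i ki).
by rewrite -c4E; case: (h i ki).
Qed.

Lemma inK0 k : inK k 0.
Proof. by move=> i _; rewrite c20 c40. Qed.
Lemma inKD k x y : inK k x -> inK k y -> inK k (x + y).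
Proof.
move=> hx hy i ki; rewrite c2D c4D.
by case: (hx i ki) => -> ->; case: (hy i ki) => -> ->; rewrite !addr0.
Qed.
Lemma inKN k x : inK k x -> inK k (- x).
Proof. by move=> hx i ki; case: (hx i ki) => h1 h2; rewrite c2N c4N h1 h2 !oppr0. Qed.
Lemma inKB k x y : inK k x -> inK k y -> inK k (x - y).
Proof. by move=> hx hy; apply: inKD => //; apply: inKN. Qed.
Lemma inKMn k x n : inK k x -> inK k (x *+ n).
Proof.
move=> hx i ki; case: (hx i ki) => h1 h2; by rewrite c2Mn c4Mn h1 h2 !mul0rn.
Qed.
Lemma inK_mono k k' x : (k <= k')%N -> inK k x -> inK k' x.
Proof. by move=> kk hx i ki; apply: hx; apply: leq_trans ki. Qed.
Lemma inK_big x : inK (a + b) x.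
Proof.
move=> i ki; rewrite c2_out ?c4_out //; lia.
Qed.

Definition addF (f : V a b -> V a b) := forall x y, f (x + y) = f x + f y.
Lemma addF0 f : addF f -> f 0 = 0.
Proof.
move=> h; have := h 0 0; rewrite addr0 => e.
by apply: (addrI (f 0)); rewrite -e addr0.
Qed.
Lemma addFN f x : addF f -> f (- x) = - f x.
Proof. by move=> h; apply/eqP; rewrite -subr_eq0 opprK -h addNr addF0. Qed.
Lemma addFB f x y : addF f -> f (x - y) = f x - f y.
Proof. by move=> h; rewrite h addFN. Qed.
Lemma addFMn f x n : addF f -> f (x *+ n) = f x *+ n.
Proof. by move=> h; elim: n => [|n IH]; rewrite ?addF0 // !mulrS h IH. Qed.

Definition auto K j (f : V a b -> V a b) :=
  [/\ addF f, injective f, (forall y, inK j y -> f y = y)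
    & (forall y, inK K y -> inK K (f y))].

Lemma auto_id K j : auto K j id.
Proof. by split. Qed.

Lemma auto_comp K j f g : auto K j f -> auto K j g -> auto K j (f \o g).
Proof.
case=> fa fi ff fp [ga gi gf gp]; split.
- by move=> x y /=; rewrite ga fa.
- exact: inj_comp.
- by move=> y hy /=; rewrite gf ?ff.
- by move=> y hy /=; apply: fp; apply: gp.
Qed.

Lemma auto_mono K j j' f : (j' <= j)%N -> auto K j f -> auto K j' f.
Proof.
move=> jj [fa fi ff fp]; split => // y hy; apply: ff; exact: inK_mono hy.
Qed.

Lemma auto_inv K j f : auto K j f ->
  exists g, [/\ auto K j g, cancel f g & cancel g f].
Proof.
case=> fa fi ff fp.
have [g fg gf] := injF_bij fi.
have ga : addF g.
  by move=> x y; apply: fi; rewrite fa !gf.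
exists g; split => //; split => //.
- exact: can_inj gf.
- by move=> y hy; rewrite -{1}(ff y hy) fg.
move=> y hy.
pose S := [set z | inKb K z].
have sub : f @: S \subset S.
  apply/subsetP => z /imsetP [w]; rewrite in_set => /inKP hw ->.
  by rewrite inE; apply/inKP; apply: fp.
have eqc : #|f @: S| = #|S| by rewrite card_imset.
have := (subset_cardP eqc sub y).
rewrite inE; move/inKP: (hy) => ->.
case/imsetP => w; rewrite in_set => /inKP hw ->.
by rewrite fg.
Qed.

End Base.

Local Open Scope ring_scope.

Lemma z2_4 (u : 'Z_2) : u *+ 4 = 0. Proof. by apply/eqP; case: u => [[|[|?]] ?]. Qed.
Lemma z2_2 (u : 'Z_2) : u *+ 2 = 0. Proof. by apply/eqP; case: u => [[|[|?]] ?]. Qed.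
Lemma z4_4 (u : 'Z_4) : u *+ 4 = 0. Proof. by apply/eqP; case: u => [[|[|[|[|?]]]] ?]. Qed.
Lemma z4_unit (c u : 'Z_4) : odd u -> c + (u - 1) *+ c = 0 -> c = 0.
Proof. move=> Hu /eqP H; apply/eqP; move: Hu H.
case: c => [[|[|[|[|?]]]] ?] //; case: u => [[|[|[|[|?]]]] ?] //. Qed.
Lemma z2_one (u : 'Z_2) : u != 0 -> u = 1.
Proof. move=> H; apply/eqP; move: H; case: u => [[|[|?]] ?] //. Qed.
Lemma z4_even2 (u : 'Z_4) : ~~ odd u -> u *+ 2 = 0.
Proof. move=> H; apply/eqP; move: H; case: u => [[|[|[|[|?]]]] ?] //. Qed.
Lemma z4_two (u : 'Z_4) : ~~ odd u -> u != 0 -> u = 2.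
Proof. move=> H H'; apply/eqP; move: H H'; case: u => [[|[|[|[|?]]]] ?] //. Qed.
Lemma vZ4 (x y : 'Z_4) : val (x + y) = ((val x + val y) %% 4)%N. Proof. by []. Qed.
Lemma vZ2 (x y : 'Z_2) : val (x + y) = ((val x + val y) %% 2)%N. Proof. by []. Qed.

Definition sw (i i' l : nat) := if l == i then i' else if l == i' then i else l.
Lemma swK i i' l : sw i i' (sw i i' l) = l.
Proof. rewrite /sw; do ! case: eqP => //=; lia. Qed.
Lemma sw_lt i i' l n : (i < n)%N -> (i' < n)%N -> (l < n)%N -> (sw i i' l < n)%N.
Proof. by rewrite /sw; do ! case: eqP. Qed.
Lemma sw_id i i' l : l != i -> l != i' -> sw i i' l = l.
Proof. by rewrite /sw => /negbTE -> /negbTE ->. Qed.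

Section S2.
Variables a b : nat.
Local Notation V := (V a b).
Local Notation c2 := (@c2 a b).
Local Notation c4 := (@c4 a b).
Local Notation mk := (@mk a b).
Local Notation inK := (@inK a b).
Local Notation auto := (@auto a b).
Local Notation addF := (@addF a b).
Implicit Types x y z w : V.

Definition swap2 i i' y : V := mk (fun l => c2 y (sw i i' l)) (c4 y).
Definition swap4 i i' y : V := mk (c2 y) (fun l => c4 y (sw i i' l)).

Lemma swap2K i i' : (i < a)%N -> (i' < a)%N -> involutive (swap2 i i').
Proof.
move=> hi hi' y; apply: Vext => l hl.
  by rewrite /swap2 !c2mk hl sw_lt // swK.
by rewrite /swap2 !c4mk hl.
Qed.
Lemma swap4K i i' : (i < b)%N -> (i' < b)%N -> involutive (swap4 i i').
Proof.
move=> hi hi' y; apply: Vext => l hl.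
  by rewrite /swap4 !c2mk hl.
by rewrite /swap4 !c4mk hl sw_lt // swK.
Qed.

Lemma swap2_auto K j i i' : (j <= i)%N -> (j <= i')%N -> (i < K)%N -> (i' < K)%N ->
  (i < a)%N -> (i' < a)%N -> auto K j (swap2 i i').
Proof.
move=> ji ji' iK i'K ia i'a; split.
- by move=> x y; apply: Vext => l hl; rewrite /swap2 /swap4 ?c2D ?c4D ?c2mk ?c4mk hl ?c2D ?c4D.
- exact: inv_inj (swap2K ia i'a).
- move=> y hy; apply: Vext => l hl; rewrite ?c2mk ?c4mk hl //.
  case: (eqVneq l i) => [->|li]; first by rewrite /sw eqxx (hy i ji).1 (hy i' ji').1.
  case: (eqVneq l i') => [->|li']; first by rewrite /sw eqxx; case: eqP => [->//|_]; rewrite (hy i ji).1 (hy i' ji').1.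
  by rewrite sw_id.
- move=> y hy l lK; rewrite c2mk c4mk; case: ifP => _; last case: ifP => _ //.
  + rewrite sw_id; [ | apply/eqP; lia | apply/eqP; lia]; split; [exact: (hy l lK).1 | ].
    by case: ifP => _; [exact: (hy l lK).2|].
  + by split => //; exact: (hy l lK).2.
Qed.

Lemma swap4_auto K j i i' : (j <= i)%N -> (j <= i')%N -> (i < K)%N -> (i' < K)%N ->
  (i < b)%N -> (i' < b)%N -> auto K j (swap4 i i').
Proof.
move=> ji ji' iK i'K ia i'a; split.
- by move=> x y; apply: Vext => l hl; rewrite /swap2 /swap4 ?c2D ?c4D ?c2mk ?c4mk hl ?c2D ?c4D.
- exact: inv_inj (swap4K ia i'a).
- move=> y hy; apply: Vext => l hl; rewrite ?c2mk ?c4mk hl //.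
  case: (eqVneq l i) => [->|li]; first by rewrite /sw eqxx (hy i ji).2 (hy i' ji').2.
  case: (eqVneq l i') => [->|li']; first by rewrite /sw eqxx; case: eqP => [->//|_]; rewrite (hy i ji).2 (hy i' ji').2.
  by rewrite sw_id.
- move=> y hy l lK; rewrite c2mk c4mk; case: ifP => _.
  + split; first exact: (hy l lK).1.
    case: ifP => _ //; rewrite sw_id; [ | apply/eqP; lia | apply/eqP; lia].
    exact: (hy l lK).2.
  + split => //; case: ifP => _ //; rewrite sw_id; [ | apply/eqP; lia | apply/eqP; lia].
    exact: (hy l lK).2.
Qed.

Definition tv z (cf : V -> nat) y : V := y + z *+ cf y.

Lemma tv_add z cf N : z *+ N = 0 -> (forall x y, cf (x + y) = ((cf x + cf y) %% N)%N) ->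
  addF (tv z cf).
Proof.
move=> zN hcf x y; rewrite /tv hcf.
have -> : z *+ ((cf x + cf y) %% N) = z *+ (cf x + cf y).
  rewrite [in RHS](divn_eq (cf x + cf y) N) mulrnDr mulnC mulrnA zN mul0rn add0r //.
by rewrite mulrnDr addrACA.
Qed.

Definition e2 j : V := mk (fun i => (i == j)%:R) (fun _ => 0).
Definition f4 j : V := mk (fun _ => 0) (fun i => (i == j)%:R).

Lemma f4_in j K : (j < K)%N -> inK K (f4 j).
Proof.
move=> jK l lK; rewrite c2mk c4mk; split; first by case: ifP.
by case: ifP => // _; case: eqP => //; lia.
Qed.
Lemma e2_in j K : (j < K)%N -> inK K (e2 j).
Proof.
move=> jK l lK; rewrite c2mk c4mk; split; last by case: ifP.
by case: ifP => // _; case: eqP => //; lia.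
Qed.
Lemma f4_in1 j : inK j.+1 (f4 j). Proof. exact: f4_in. Qed.
Lemma e2_in1 j : inK j.+1 (e2 j). Proof. exact: e2_in. Qed.

Lemma T4 K j w l0 : inK K w -> (forall i, (i < j)%N -> c2 w i = 0 /\ c4 w i = 0) ->
  (j <= l0)%N -> (l0 < K)%N -> (l0 < b)%N -> odd (c4 w l0) ->
  exists th, auto K j th /\ th (f4 j) = w.
Proof.
move=> wK wj jl lK lb odd0.
have jb : (j < b)%N by lia.
have jK : (j < K)%N by lia.
have sa := swap4_auto (K:=K) (j:=j) (leqnn j) jl jK lK jb lb.
set s := swap4 j l0 in sa *.
set w' := s w.
set z := w' - f4 j.
set cf := fun y : V => nat_of_ord (c4 y j).
have zK : inK K z by apply: inKB; [case: sa => _ _ _; apply | exact: f4_in].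
have ta : addF (tv z cf).
  apply: (@tv_add _ _ 4).
    by apply: Vext' => i; rewrite ?c2Mn ?c4Mn ?c20 ?c40 ?z2_4 ?z4_4.
  by move=> x y; rewrite /cf c4D.
have w'j : c4 w' j = c4 w l0 by rewrite c4mk jb /sw eqxx.
have t0 : forall y, tv z cf y = 0 -> y = 0.
  move=> y hy.
  have cy : c4 y j = 0.
    apply: (@z4_unit _ (c4 w' j)); first by rewrite w'j.
    have := congr1 (fun v => c4 v j) hy; rewrite /= /tv c4D c4Mn c40 /z c4B w'j /f4 c4mk jb eqxx.
    by rewrite /cf.
  by move: hy; rewrite /tv /cf cy /= addr0.
exists (s \o tv z cf); split.
  apply: auto_comp => //; split => //.
  - move=> x y e; apply/eqP; rewrite -subr_eq0; apply/eqP; apply: t0.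
    by rewrite (addFB _ _ ta) e subrr.
  - by move=> y hy; rewrite /tv /cf (hy j (leqnn j)).2 /= addr0.
  - by move=> y hy; apply: inKD => //; apply: inKMn.
rewrite /= /tv /cf c4mk jb eqxx /= addrC /z subrK.
exact: swap4K.
Qed.

Lemma T2 K j w i0 : inK K w -> (forall i, (i < j)%N -> c2 w i = 0 /\ c4 w i = 0) ->
  (j <= i0)%N -> (i0 < K)%N -> (i0 < a)%N -> c2 w i0 = 1 -> w + w = 0 ->
  exists th, auto K j th /\ th (e2 j) = w.
Proof.
move=> wK wj jl lK lb w1 ww.
have jb : (j < a)%N by lia.
have jK : (j < K)%N by lia.
have sa := swap2_auto (K:=K) (j:=j) (leqnn j) jl jK lK jb lb.
set s := swap2 j i0 in sa *.
set w' := s w.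
set z := w' - e2 j.
set cf := fun y : V => nat_of_ord (c2 y j).
have zK : inK K z by apply: inKB; [case: sa => _ _ _; apply | exact: e2_in].
have ta : addF (tv z cf).
  apply: (@tv_add _ _ 2).
    rewrite /z mulrnBl; case: sa => sad _ _ _.
    rewrite /w' -(addFMn _ _ sad) mulr2n ww (addF0 sad) sub0r.
    have -> : e2 j *+ 2 = 0 by apply: Vext' => i; rewrite ?c2Mn ?c4Mn ?c20 ?c40 ?z2_2 // /e2 c4mk; case: ifP; rewrite mul0rn.
    by rewrite oppr0.
  by move=> x y; rewrite /cf c2D.
have w'j : c2 w' j = 1 by rewrite c2mk jb /sw eqxx.
have t0 : forall y, tv z cf y = 0 -> y = 0.
  move=> y hy.
  have cy : c2 y j = 0.
    have := congr1 (fun v => c2 v j) hy; rewrite /= /tv c2D c2Mn c20 /z c2B w'j /e2 c2mk jb eqxx.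
    by rewrite subrr mul0rn addr0.
  by move: hy; rewrite /tv /cf cy /= addr0.
exists (s \o tv z cf); split.
  apply: auto_comp => //; split => //.
  - move=> x y e; apply/eqP; rewrite -subr_eq0; apply/eqP; apply: t0.
    by rewrite (addFB _ _ ta) e subrr.
  - by move=> y hy; rewrite /tv /cf (hy j (leqnn j)).1 /= addr0.
  - by move=> y hy; apply: inKD => //; apply: inKMn.
rewrite /= /tv /cf c2mk jb eqxx /= addrC /z subrK.
exact: swap2K.
Qed.

End S2.

Local Open Scope ring_scope.

Definition tr a1 b1 a2 b2 k (x : V a1 b1) : V a2 b2 :=
  mk a2 b2 (fun i => if (i < k)%N then c2 x i else 0)
           (fun i => if (i < k)%N then c4 x i else 0).

Section Tr.
Variables a1 b1 a2 b2 : nat.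
Implicit Types x y : V a1 b1.

Lemma c2tr k x i : c2 (tr a2 b2 k x) i = if (i < a2)%N && (i < k)%N then c2 x i else 0.
Proof. by rewrite c2mk; case: (i < a2)%N. Qed.
Lemma c4tr k x i : c4 (tr a2 b2 k x) i = if (i < b2)%N && (i < k)%N then c4 x i else 0.
Proof. by rewrite c4mk; case: (i < b2)%N. Qed.

Lemma trD k x y : tr a2 b2 k (x + y) = tr a2 b2 k x + tr a2 b2 k y.
Proof.
apply: Vext' => i; rewrite ?c2D ?c4D ?c2tr ?c4tr ?c2D ?c4D; case: ifP => //; by rewrite addr0.
Qed.
Lemma tr0 k : tr a2 b2 k (0 : V a1 b1) = 0.
Proof. by apply: Vext' => i; rewrite ?c2tr ?c4tr ?c20 ?c40; case: ifP. Qed.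
Lemma trN k x : tr a2 b2 k (- x) = - tr a2 b2 k x.
Proof. by apply/eqP; rewrite -subr_eq0 opprK -trD addNr tr0. Qed.
Lemma trB k x y : tr a2 b2 k (x - y) = tr a2 b2 k x - tr a2 b2 k y.
Proof. by rewrite trD trN. Qed.

Lemma tr_in k x : inK k (tr a2 b2 k x).
Proof.
move=> i ki; rewrite c2tr c4tr; have -> : (i < k)%N = false by apply/negbTE; rewrite -leqNgt.
by rewrite !andbF.
Qed.

Lemma tr_eq k p x : inK k x -> inK p x -> tr a2 b2 k x = tr a2 b2 p x.
Proof.
move=> hk hp; apply: Vext' => i; rewrite ?c2tr ?c4tr.
- case: (ltnP i k) => ik; case: (ltnP i p) => ip //=; rewrite ?andbT ?andbF;
    case: ifP => // _; [exact: (hp i ip).1 | exact: (esym (hk i ik).1)].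
- case: (ltnP i k) => ik; case: (ltnP i p) => ip //=; rewrite ?andbT ?andbF;
    case: ifP => // _; [exact: (hp i ip).2 | exact: (esym (hk i ik).2)].
Qed.

End Tr.

Lemma trK a1 b1 a2 b2 k (x : V a1 b1) : (k <= a2)%N -> (k <= b2)%N -> inK k x ->
  tr a1 b1 k (tr a2 b2 k x) = x.
Proof.
move=> ka kb hx; apply: Vext' => i; rewrite ?c2tr ?c4tr.
- case: (ltnP i k) => ik; rewrite ?andbT ?andbF.
    have -> : (i < a2)%N by lia.
    by case: ifP => //= /negbT; rewrite -leqNgt => h; rewrite c2_out.
  by rewrite (hx i ik).1.
- case: (ltnP i k) => ik; rewrite ?andbT ?andbF.
    have -> : (i < b2)%N by lia.
    by case: ifP => //= /negbT; rewrite -leqNgt => h; rewrite c4_out.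
  by rewrite (hx i ik).2.
Qed.

Lemma tr_inj0 a1 b1 a2 b2 k (x : V a1 b1) : (k <= a2)%N -> (k <= b2)%N -> inK k x ->
  tr a2 b2 k x = 0 -> x = 0.
Proof.
move=> ka kb hx e; rewrite -(trK ka kb hx) e; exact: tr0.
Qed.

Section SE.
Variables a b : nat.
Local Notation V := (V a b).
Local Notation c2 := (@c2 a b).
Local Notation c4 := (@c4 a b).
Local Notation mk := (@mk a b).
Local Notation inK := (@inK a b).
Local Notation auto := (@auto a b).
Local Notation addF := (@addF a b).
Implicit Types x y z w : V.

Lemma inv_apply K j th w u : auto K j th -> th u = w ->
  exists g, auto K j g /\ g w = u /\ (forall y, inK j y -> g y = y).
Proof.
move=> ath e; have [g [ag thg gth]] := auto_inv ath.
exists g; split => //; split; first by rewrite -e thg.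
by case: ag.
Qed.

Lemma SE K j x : (j < a)%N -> (j < b)%N -> inK K x ->
  exists g, auto K j g /\ inK j.+1 (g x).
Proof.
move=> ja jb xK.
case: (leqP K j) => Kj.
  exists id; split; first exact: auto_id.
  by apply: inK_mono xK; lia.
set xe : V := tr a b j x.
set t := x - xe.
have xeE : inK j xe by apply: tr_in.
have xe1 : inK j.+1 xe by apply: inK_mono xeE.
have xeK : inK K xe by apply: inK_mono xeE; lia.
have tK : inK K t by apply: inKB.
have tlo : forall i, (i < j)%N -> c2 t i = 0 /\ c4 t i = 0.
  move=> i ij; rewrite /t c2B c4B /xe c2tr c4tr ij !andbT.
  split.
    by case: (ltnP i a) => h //=; rewrite ?subrr // c2_out // subrr.
  by case: (ltnP i b) => h //=; rewrite ?subrr // c4_out // subrr.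
have xd : x = xe + t by rewrite /t addrC subrK.
have fin : forall g, auto K j g -> forall u, g t = u -> inK j.+1 u -> inK j.+1 (g x).
  move=> g [ga _ gf _] u gt hu; rewrite xd ga gf // gt; exact: inKD.
clearbody t.
case: (boolP [exists l : 'I_b, (j <= l)%N && (l < K)%N && odd (c4 t l)]).
  case/existsP => l /andP [/andP [jl lK] ol].
  have [th [ath tht]] := T4 tK tlo jl lK (ltn_ord l) ol.
  have [g [ag [gt _]]] := inv_apply ath tht.
  exists g; split => //; apply: (fin g ag _ gt); exact: f4_in1.
move/existsPn => nA.
have evA : forall l, (l < b)%N -> ~~ odd (c4 t l).
  move=> l lb; case: (ltnP l j) => lj; first by rewrite (tlo l lj).2.
  case: (ltnP l K) => lK; last by rewrite (tK l lK).2.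
  by have := nA (Ordinal lb); rewrite /= lj lK.
case: (boolP [exists i : 'I_a, (j <= i)%N && (i < K)%N && (c2 t i != 0)]).
  case/existsP => i /andP [/andP [ji iK] ni].
  have tt : t + t = 0.
    apply: Vext => l hl; rewrite ?c2D ?c4D ?c20 ?c40 -mulr2n ?z2_2 //.
    by apply: z4_even2; apply: evA.
  have [th [ath tht]] := T2 tK tlo ji iK (ltn_ord i) (z2_one ni) tt.
  have [g [ag [gt _]]] := inv_apply ath tht.
  exists g; split => //; apply: (fin g ag _ gt); exact: e2_in1.
move/existsPn => nB.
have zB : forall i, c2 t i = 0.
  move=> i; case: (ltnP i a) => ia; last by rewrite c2_out.
  case: (ltnP i j) => ij; first by rewrite (tlo i ij).1.
  case: (ltnP i K) => iK; last by rewrite (tK i iK).1.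
  by have := nB (Ordinal ia); rewrite /= ij iK /= negbK => /eqP.
case: (boolP [exists l : 'I_b, (j <= l)%N && (l < K)%N && (c4 t l != 0)]).
  case/existsP => l /andP [/andP [jl lK] nl].
  set h : V := mk (fun _ => 0) (fun l => if c4 t l == 2 then 1 else 0).
  have c4t : forall l, (l < b)%N -> c4 t l != 2 -> c4 t l = 0.
    move=> l' lb' n2; apply/eqP; apply: contraR n2 => n0.
    by apply/eqP; apply: z4_two => //; apply: evA.
  have ht : h + h = t.
    apply: Vext => i hi; rewrite ?c2D ?c4D ?c2mk ?c4mk hi ?addr0 ?zB //.
    case: eqP => [-> //|/eqP n2]; by rewrite addr0 c4t.
  have hK : inK K h.
    move=> i iK; rewrite c2mk c4mk (tK i iK).2; split; case: ifP => //.
  have hlo : forall i, (i < j)%N -> c2 h i = 0 /\ c4 h i = 0.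
    move=> i ij; rewrite c2mk c4mk (tlo i ij).2; split; case: ifP => //.
  have ol : odd (c4 h l).
    by rewrite c4mk ltn_ord (z4_two (evA _ (ltn_ord l)) nl).
  have [th [ath tht]] := T4 hK hlo jl lK (ltn_ord l) ol.
  have [g [ag [gt _]]] := inv_apply ath tht.
  exists g; split => //; apply: (fin g ag (f4 a b j + f4 a b j)).
    by rewrite -ht; case: ag => ga _ _ _; rewrite ga gt.
  by apply: inKD; exact: f4_in1.
move/existsPn => nC.
have t0 : t = 0.
  apply: Vext' => i; rewrite ?c20 ?c40 ?zB //.
  case: (ltnP i b) => ib; last by rewrite c4_out.
  case: (ltnP i j) => ij; first by rewrite (tlo i ij).2.
  case: (ltnP i K) => iK; last by rewrite (tK i iK).2.
  by have := nC (Ordinal ib); rewrite /= ij iK /= negbK => /eqP.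
exists id; split; first exact: auto_id.
by rewrite xd t0 addr0.
Qed.

Lemma claim_n K n : forall (ys : seq V) j, size ys = n -> (forall y, y \in ys -> inK K y) ->
  (j + n <= a)%N -> (j + n <= b)%N ->
  exists f, auto K j f /\ forall y, y \in ys -> inK (j + n) (f y).
Proof.
elim: n => [|n IH] [|y ys] j //= sz hK ha hb.
  by exists id; split => //; exact: auto_id.
case: sz => sz.
have [g [ag gy]] := SE (x:=y) (K:=K) (j:=j) ltac:(lia) ltac:(lia)
   (hK y (mem_head _ _)).
have hK' : forall z, z \in map g ys -> inK K z.
  move=> z /mapP [y' y'in ->]; case: ag => _ _ _; apply; apply: hK.
  by rewrite in_cons y'in orbT.
have [f [af fy]] := IH (map g ys) j.+1 ltac:(by rewrite size_map) hK' ltac:(lia) ltac:(lia).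
exists (f \o g); split.
  apply: auto_comp => //; exact: auto_mono af.
move=> z; rewrite in_cons => /orP [/eqP ->|zin] /=.
  case: af => _ _ ff _; rewrite ff //; apply: inK_mono gy; lia.
have := fy (g z) (map_f g zin); rewrite addSnnS; by [].
Qed.

Lemma claim K (ys : seq V) j : (forall y, y \in ys -> inK K y) ->
  (j + size ys <= a)%N -> (j + size ys <= b)%N ->
  exists f, auto K j f /\ forall y, y \in ys -> inK (j + size ys) (f y).
Proof. exact: claim_n. Qed.

End SE.

Local Open Scope ring_scope.

Section Transfer.
Variables a1 b1 a2 b2 k : nat.
Hypotheses (ka1 : (k <= a1)%N) (kb1 : (k <= b1)%N) (ka2 : (k <= a2)%N) (kb2 : (k <= b2)%N).

Definition dH (d : V a1 b1 -> V a1 b1) (y : V a2 b2) : V a2 b2 :=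
  tr a2 b2 k (d (tr a1 b1 k y)) + (y - tr a2 b2 k (tr a1 b1 k y)).

Lemma dH_add d : addF d -> addF (dH d).
Proof.
move=> da x y; rewrite /dH !trD da trD opprD.
by rewrite (addrACA x y) (addrACA (tr a2 b2 k (d (tr a1 b1 k x)))).
Qed.

Lemma dH_tr d x : inK k x -> dH d (tr a2 b2 k x) = tr a2 b2 k (d x).
Proof. by move=> hx; rewrite /dH trK // subrr addr0. Qed.

Lemma dH_inj d : auto k 0 d -> injective (dH d).
Proof.
case=> da di _ dp.
have d0 : forall y, dH d y = 0 -> y = 0.
  move=> y hy.
  set u := tr a1 b1 k y.
  have uk : inK k u by apply: tr_in.
  have duk : inK k (d u) by apply: dp.
  set r := y - tr a2 b2 k u.
  have r0 : r = 0.
    apply: Vext' => i.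
    - case: (ltnP i k) => ik.
        rewrite /r c2B c2tr ik andbT /u c2tr ik andbT c20.
        case: (ltnP i a2) => h //=; last by rewrite c2_out // subrr.
        case: (ltnP i a1) => h' /=; first by rewrite subrr.
        by rewrite c2_out ?subrr //; lia.
      have := congr1 (fun v => c2 v i) hy; rewrite /= c20 /dH -/u c2D -/r.
      by rewrite c2tr (ltnNge i k) ik andbF add0r.
    - case: (ltnP i k) => ik.
        rewrite /r c4B c4tr ik andbT /u c4tr ik andbT c40.
        case: (ltnP i b2) => h //=; last by rewrite c4_out // subrr.
        case: (ltnP i b1) => h' /=; first by rewrite subrr.
        by rewrite c4_out ?subrr //; lia.
      have := congr1 (fun v => c4 v i) hy; rewrite /= c40 /dH -/u c4D -/r.
      by rewrite c4tr (ltnNge i k) ik andbF add0r.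
  have : tr a2 b2 k (d u) = 0 by move: hy; rewrite /dH -/u -/r r0 addr0.
  move/(tr_inj0 ka2 kb2 duk) => du0.
  have u0 : u = 0 by apply: di; rewrite du0 (addF0 da).
  by move: r0; rewrite /r u0 tr0 subr0.
have da' := dH_add da.
move=> x y e; apply/eqP; rewrite -subr_eq0; apply/eqP; apply: d0.
by rewrite (addFB _ _ da') e subrr.
Qed.

End Transfer.

Local Open Scope group_scope.
Local Open Scope ring_scope.

Section Game.
Variables a1 b1 a2 b2 m : nat.
Local Notation G := (Z2Z4 a1 b1).
Local Notation H := (Z2Z4 a2 b2).
Local Notation cfg := (config G H m).

Definition Inv (c : cfg) : Prop :=
  exists (al : V a1 b1 -> V a1 b1) (be : V a2 b2 -> V a2 b2) k,
   [/\ [/\ (k <= a1)%N, (k <= b1)%N, (k <= a2)%N & (k <= b2)%N],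
       addF al /\ injective al, addF be /\ injective be &
       forall i p, c i = Some p -> inK k (al p.1) /\ be p.2 = tr a2 b2 k (al p.1)].

Lemma Inv_ext (c c' : cfg) : (forall i, c i = c' i) -> Inv c -> Inv c'.
Proof.
move=> e [al [be [k [hk ha hb hc]]]]; exists al, be, k; split => // i p.
rewrite -e; exact: hc.
Qed.

Lemma Inv_pick D (c : cfg) : Inv c -> Inv (pick_up D c).
Proof.
move=> [al [be [k [hk ha hb hc]]]]; exists al, be, k; split => // i p.
rewrite /pick_up; case: ifP => // _; exact: hc.
Qed.


Lemma mem_pebbled (c : cfg) p : p \in pebbled c -> exists i, c i = Some p.
Proof.
rewrite /pebbled mem_pmap => /mapP [i _ e]; by exists i.
Qed.

Lemma Inv_iso (c : cfg) : Inv c -> extends_to_iso c.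
Proof.
move=> [al [be [k [[ka1 kb1 ka2 kb2] [ala ali] [bea bei] hc]]]].
have [binv bK Kb] := injF_bij bei.
pose F (x : G) : H := binv (tr a2 b2 k (al x)).
have Fa : forall x y : G, F (x * y)%g = (F x * F y)%g.
  move=> x y; rewrite /F; apply: bei.
  change (be (binv (tr a2 b2 k (al (x + y)))) = be (binv (tr a2 b2 k (al x)) + binv (tr a2 b2 k (al y)))).
  by rewrite bea !Kb ala trD.
rewrite /extends_to_iso.
set gs := [set p.1 | p in pebbled c].
set hs := [set p.2 | p in pebbled c].
have Fm : {in <<gs>> &, {morph F : x y / (x * y)%g >-> (x * y)%g}}.
  by move=> x y _ _; exact: Fa.
have Fp : forall p, p \in pebbled c -> F p.1 = p.2.
  move=> p /mem_pebbled [i ci]; rewrite /F -(hc i p ci).2; exact: bK.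
pose S := [set z : G | inKb k (al z)].
have Sg : group_set S.
  apply/group_setP; split.
    rewrite inE; apply/inKP; rewrite (addF0 ala); exact: inK0.
  move=> x y; rewrite !inE => /inKP hx /inKP hy; apply/inKP.
  change (inK k (al (x + y))); rewrite ala; exact: inKD.
have sub : <<gs>> \subset S.
  rewrite (gen_subG _ (Group Sg)); apply/subsetP => z /imsetP [p pin ->].
  have [i ci] := mem_pebbled pin.
  by rewrite inE; apply/inKP; exact: (hc i p ci).1.
exists (Morphism Fm); split; last exact: Fp.
apply/isomP; split.
  apply/injmP => x y xin yin /= e.
  have hx : inK k (al x) by have := subsetP sub x xin; rewrite inE => /inKP.
  have hy : inK k (al y) by have := subsetP sub y yin; rewrite inE => /inKP.
  have e' : tr a2 b2 k (al x) = tr a2 b2 k (al y).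
    by rewrite -[LHS]Kb -[RHS]Kb; congr be.
  apply: ali; apply/eqP; rewrite -subr_eq0; apply/eqP.
  apply: (tr_inj0 ka2 kb2); first exact: inKB.
  by rewrite trB e' subrr.
rewrite morphim_gen ?subset_gen //; congr <<_>>.
rewrite morphimEsub ?subset_gen // /gs -imset_comp.
apply: eq_in_imset => p pin /=; exact: Fp.
Qed.

Lemma Inv_step (hm1 : (m <= a1)%N) (hm2 : (m <= b1)%N) (hm3 : (m <= a2)%N) (hm4 : (m <= b2)%N)
  D (c : cfg) (am : 'I_m -> G) : Inv (pick_up D c) -> exists bm, Inv (place D am bm c).
Proof.
move=> [al [be [k [[ka1 kb1 ka2 kb2] [ala ali] [bea bei] hc]]]].
pose v (i : 'I_m) : V a1 b1 := if c i is Some p then (p.1 : V a1 b1) else 0.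
pose ys := [seq al (v i) | i <- enum (~: D)].
have szy : size ys = #|~: D| by rewrite size_map -cardE.
have cD : (#|D| + #|~: D| = m)%N by rewrite cardsC card_ord.
have yK : forall y, y \in ys -> inK k y.
  move=> y /mapP [i]; rewrite mem_enum inE => iD ->; rewrite /v.
  case ci: (c i) => [p|]; last by rewrite (addF0 ala); exact: inK0.
  by have := hc i p; rewrite /pick_up (negbTE iD) => /(_ ci) [].
have [de [ade dey]] := claim (K:=k) (j:=0) yK ltac:(lia) ltac:(lia).
have [de_a de_i de_f de_p] := ade.
pose al' := de \o al.
pose be' := @dH a1 b1 a2 b2 k de \o be.
have al'a : addF al' by move=> x y; rewrite /al' /= ala de_a.
have al'i : injective al' by apply: inj_comp.
have be'a : addF be' by move=> x y; rewrite /be' /= bea (dH_add _ de_a).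
have be'i : injective be' by apply: inj_comp => //; exact: (dH_inj ka1 kb1 ka2 kb2 ade).
set p0 := size ys.
have hc' : forall i p, i \notin D -> c i = Some p ->
   inK p0 (al' p.1) /\ be' p.2 = tr a2 b2 p0 (al' p.1).
  move=> i p iD ci.
  have ci' : pick_up D c i = Some p by rewrite /pick_up (negbTE iD).
  have [h1 h2] := hc i p ci'.
  have yin : al p.1 \in ys.
    have -> : (p.1 : V a1 b1) = v i by rewrite /v ci.
    by apply: map_f; rewrite mem_enum inE.
  have i1 := dey _ yin.
  have i2 : inK k (de (al p.1)) by apply: de_p.
  split => //.
  by rewrite /be' /= h2 (dH_tr ka2 kb2 _ h1); apply: tr_eq; [exact: i2 | exact: i1].
pose xs := [seq al' (am i) | i <- enum D].
have szx : size xs = #|D| by rewrite size_map -cardE.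
have xK : forall x, x \in xs -> inK (a1 + b1) x by move=> x _; exact: inK_big.
have [ga [aga gax]] := claim (K:=a1+b1) (j:=p0) xK ltac:(lia) ltac:(lia).
have [ga_a ga_i ga_f ga_p] := aga.
have [binv bK Kb] := injF_bij be'i.
pose al'' := ga \o al'.
exists (fun i => binv (tr a2 b2 m (al'' (am i)))).
exists al'', be', m; split => //.
- split; first by move=> x y; rewrite /al'' /= al'a ga_a.
  exact: inj_comp.
move=> i p; rewrite /place; case: ifP => iD.
  move=> [<-] /=; rewrite Kb; split => //.
  have := gax (al' (am i)) (map_f _ _); rewrite mem_enum iD => /(_ isT).
  have e : (p0 + size xs = m)%N by rewrite szx /p0 szy addnC cD.
  by rewrite e.
move=> ci; have [h1 h2] := hc' i p (negbT iD) ci.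
have fx : al'' p.1 = al' p.1 by rewrite /al'' /= ga_f.
rewrite fx; split; first by apply: inK_mono h1; lia.
by rewrite h2; apply: tr_eq => //; apply: inK_mono h1; lia.
Qed.

End Game.

Local Open Scope ring_scope.

Definition swapc a1 b1 a2 b2 m (c : config (Z2Z4 a1 b1) (Z2Z4 a2 b2) m) :
  config (Z2Z4 a2 b2) (Z2Z4 a1 b1) m := fun i => omap (fun p => (p.2, p.1)) (c i).

Lemma Inv_swap a1 b1 a2 b2 m (c : config (Z2Z4 a1 b1) (Z2Z4 a2 b2) m) :
  Inv c -> Inv (swapc c).
Proof.
move=> [al [be [k [[ka1 kb1 ka2 kb2] ha hb hc]]]].
exists be, al, k; split => // i p'; rewrite /swapc.
case ci: (c i) => [p|] //= [<-] /=.
have [h1 h2] := hc i p ci.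
split; first by rewrite h2; exact: tr_in.
by rewrite h2 trK.
Qed.

Lemma Inv_step2 a1 b1 a2 b2 m (hm1 : (m <= a1)%N) (hm2 : (m <= b1)%N)
  (hm3 : (m <= a2)%N) (hm4 : (m <= b2)%N) D (c : config (Z2Z4 a1 b1) (Z2Z4 a2 b2) m) bm :
  Inv (pick_up D c) -> exists am, Inv (place D am bm c).
Proof.
move=> Ic.
have I3 : Inv (pick_up D (swapc c)).
  apply: Inv_ext (Inv_swap Ic) => i.
  by rewrite /swapc /pick_up; case: ifP.
have [am Ia] := Inv_step hm3 hm4 hm1 hm2 bm I3.
exists am; apply: Inv_ext (Inv_swap Ia) => i.
rewrite /swapc /place; case: ifP => //= _; by case: (c i) => [[x y]|].
Qed.

Lemma surv a1 b1 a2 b2 m q (hm1 : (m <= a1)%N) (hm2 : (m <= b1)%N)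
  (hm3 : (m <= a2)%N) (hm4 : (m <= b2)%N) :
  forall c : config (Z2Z4 a1 b1) (Z2Z4 a2 b2) m, Inv c -> dup_survives q c.
Proof.
cofix CIH => c Ic.
constructor => D HD; split; [|split].
- exact: Inv_iso (Inv_pick D Ic).
- move=> am; case: (Inv_step hm1 hm2 hm3 hm4 am (Inv_pick D Ic)) => bm Ib.
  exists bm; exact: CIH _ Ib.
- move=> bm; case: (Inv_step2 hm1 hm2 hm3 hm4 bm (Inv_pick D Ic)) => am Ia.
  exists am; exact: CIH _ Ia.
Qed.


End Dev.
Import Dev.


Lemma divb x y : x <= y * 4 -> x %/ 4 <= y.
Proof. move=> h; rewrite -(mulnK y (_ : 0 < 4)) //; exact: leq_div2r. Qed.

Theorem theorem1p3 (q n : nat) (hq : 1 <= q) (hn : 5 <= n) :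
  dup_wins_game (Gn q n) (Hn q n) (q * n %/ 4) q.
Proof.
split.
  rewrite /Gn /Hn /Z2Z4 !cardsT !card_prod !card_mx !card_ord /= !mul1n.
  have -> : 4 = 2 ^ 2 by [].
  rewrite -!expnM -!expnD; congr (2 ^ _); lia.
apply: (@surv (q * n) (q * n) (q * (n - 2)) (q * (n + 1))).
1-4: apply: divb; rewrite -mulnA leq_mul2l; apply/orP; right; lia.
exists id, id, 0; split => //; by split => //.
Qed.
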